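(* Let $G:=F_0*X_0*X_1$ be a free product of groups and let $h$ be an automorphism of $G$ which fixes $F_0$ pointwise, leaves $X_0*X_1$ invariant, and acts on $X_0*X_1$ as an automorphism of prime order $p$ whose fixed point set is exactly $X_0$. Suppose that $h$ fixes the conjugacy class of an element $a\in G\setminus\big((F_0*X_0)\cup(X_0*X_1)\big)$ which is cyclically reduced of the form $a=a_1x_1a_2x_2\cdots a_mx_m$ with $a_i\in F_0\setminus\{1\}$ and $x_i\in (X_0*X_1)\setminus\{1\}$ for $i=1,\dots,m$. Then there is a permutation $\sigma$ in the subgroup $\langle(1\,2\,\cdots\,m)\rangle$ of $Sym(\{1,\dots,m\})$ such that (i) $a_i=a_{\sigma(i)}$ and $h(x_i)=x_{\sigma(i)}$ for all $i$, and (ii) $p$ divides the order of $\sigma$.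
   Context: ''$h$ fixes the conjugacy class of $a$'' means $h(a)$ is conjugate to $a$ in $G$. Cyclically reduced refers to the free product decomposition $G=F_0*(X_0*X_1)$. *)

(* Defs.v *)
(* Abstract (possibly infinite) groups are given by an
   explicit record with the group axioms; free products are internal free
   products, defined through the normal form theorem (uniqueness of reduced
   alternating words). *)
From Stdlib Require List.
From mathcomp Require Import all_boot all_fingroup.
Set Implicit Arguments. Unset Strict Implicit. Unset Printing Implicit Defensive.

Record Grp := {
  gcar :> Type;
  gmul : gcar -> gcar -> gcar;
  gone : gcar;
  ginv : gcar -> gcar;
  gmulA : forall x y z, gmul x (gmul y z) = gmul (gmul x y) z;
  gmul1g : forall x, gmul gone x = x;
  gmulVg : forall x, gmul (ginv x) x = gone
}.

Section GrpDefs.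
Variable G : Grp.

Definition gprod (s : seq G) : G := foldr (@gmul G) (gone G) s.

Definition is_subgroup (A : G -> Prop) : Prop :=
  A (gone G) /\ (forall x y, A x -> A y -> A (gmul x y)) /\
  (forall x, A x -> A (ginv x)).

Definition gen2 (A B : G -> Prop) : G -> Prop :=
  fun g => exists s : seq G, (forall x, List.In x s -> A x \/ B x) /\ g = gprod s.

Definition reduced_word (A B : G -> Prop) (w : seq (bool * G)) : Prop :=
  (forall u, List.In u w -> u.2 <> gone G /\ (if u.1 then A u.2 else B u.2)) /\
  sorted (fun u v : bool * G => u.1 != v.1) w.

Definition free_product (A B : G -> Prop) : Prop :=
  is_subgroup A /\ is_subgroup B /\
  forall w1 w2, reduced_word A B w1 -> reduced_word A B w2 ->
    gprod (map snd w1) = gprod (map snd w2) -> w1 = w2.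

Definition is_automorphism (h : G -> G) : Prop :=
  (forall x y, h (gmul x y) = gmul (h x) (h y)) /\ bijective h.

Definition are_conjugate (x y : G) : Prop :=
  exists g : G, y = gmul (ginv g) (gmul x g).

Definition order_on (Y : G -> Prop) (h : G -> G) (n : nat) : Prop :=
  0 < n /\ (forall y, Y y -> iter n h y = y) /\
  (forall k, 0 < k < n -> exists y, Y y /\ iter k h y <> y).

End GrpDefs.

(* the m-cycle (1 2 ... m), on indices 'I_m = {0, ..., m-1} *)
Definition mcycle (m : nat) : 'S_m := perm (@ordS_inj m).

(* Main.v *)
Require Import Defs.
From mathcomp Require Import all_boot all_fingroup.
From Stdlib Require Import Classical.
Set Implicit Arguments. Unset Strict Implicit. Unset Printing Implicit Defensive.

Lemma gmulgV (G : Grp) (x : G) : gmul x (ginv x) = gone G.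
Proof.
have e : gmul (ginv (ginv x)) (ginv x) = gone G by rewrite gmulVg.
rewrite -[LHS]gmul1g -{1}e -gmulA (gmulA (ginv x)) gmulVg gmul1g. exact: e.
Qed.

Lemma gmulg1 (G : Grp) (x : G) : gmul x (gone G) = x.
Proof. by rewrite -(gmulVg x) gmulA gmulgV gmul1g. Qed.

Lemma gmulKg (G : Grp) (x y : G) : gmul (ginv x) (gmul x y) = y.
Proof. by rewrite gmulA gmulVg gmul1g. Qed.

Lemma gmulgK (G : Grp) (x y : G) : gmul (gmul y x) (ginv x) = y.
Proof. by rewrite -gmulA gmulgV gmulg1. Qed.

Lemma gmulI (G : Grp) (x y z : G) : gmul x y = gmul x z -> y = z.
Proof. by move=> e; rewrite -(gmulKg x y) e gmulKg. Qed.

Lemma ginv_uniq (G : Grp) (x y : G) : gmul x y = gone G -> y = ginv x.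
Proof. by move=> e; apply: (@gmulI _ x); rewrite e gmulgV. Qed.

Lemma ginvK (G : Grp) (x : G) : ginv (ginv x) = x.
Proof. by symmetry; apply: ginv_uniq; rewrite gmulVg. Qed.

Lemma ginvM (G : Grp) (x y : G) : ginv (gmul x y) = gmul (ginv y) (ginv x).
Proof.
by symmetry; apply: ginv_uniq; rewrite -gmulA (gmulA y) gmulgV gmul1g gmulgV.
Qed.

Lemma ginv1 (G : Grp) : ginv (gone G) = gone G.
Proof. by symmetry; apply: ginv_uniq; rewrite gmul1g. Qed.

Lemma gprod_cat (G : Grp) (s1 s2 : seq G) :
  gprod (s1 ++ s2) = gmul (gprod s1) (gprod s2).
Proof. by elim: s1 => [|x s IH] /=; rewrite ?gmul1g // IH gmulA. Qed.

Lemma gprod_rcons (G : Grp) (s : seq G) x :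
  gprod (rcons s x) = gmul (gprod s) x.
Proof. by rewrite -cats1 gprod_cat /= gmulg1. Qed.

Fixpoint AllL (T : Type) (P : T -> Prop) (s : seq T) : Prop :=
  match s with [::] => True | x :: s' => P x /\ AllL P s' end.

Lemma AllL_In T (P : T -> Prop) s : AllL P s <-> (forall x, List.In x s -> P x).
Proof.
elim: s => [|x s IH] /=; first by split => // _ y [].
split=> [[Px /IH H] y [<-|/H]|H] //. split; first by apply: H; left.
by apply/IH => y Hy; apply: H; right.
Qed.

Lemma AllL_cat T (P : T -> Prop) s1 s2 : AllL P (s1 ++ s2) <-> AllL P s1 /\ AllL P s2.
Proof. elim: s1 => [|x s IH] /=; first by tauto. rewrite IH; tauto. Qed.

Lemma AllL_rcons T (P : T -> Prop) s x : AllL P (rcons s x) <-> AllL P s /\ P x.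
Proof. rewrite -cats1 AllL_cat /=; tauto. Qed.

Lemma AllL_rot T (P : T -> Prop) n s : AllL P (rot n s) <-> AllL P s.
Proof. rewrite /rot AllL_cat -{3}(cat_take_drop n s) AllL_cat; tauto. Qed.

Definition tneq (G : Grp) : rel (bool * G) := fun u v => u.1 != v.1.
Definition inv_l (G : Grp) (u : bool * G) : bool * G := (u.1, ginv u.2).
Definition wprod (G : Grp) (w : seq (bool * G)) : G := gprod (map snd w).
Definition Fin (G : Grp) (A B : G -> Prop) (t : bool) (x : G) := if t then A x else B x.
Definition okl (G : Grp) (A B : G -> Prop) (u : bool * G) :=
  u.2 <> gone G /\ Fin A B u.1 u.2.
Definition cyc_red (G : Grp) (A B : G -> Prop) (w : seq (bool * G)) :=
  AllL (okl A B) w /\ path.cycle (@tneq G) w /\ w <> [::].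

Lemma reducedE (G : Grp) (A B : G -> Prop) w :
  reduced_word A B w <-> AllL (okl A B) w /\ sorted (@tneq G) w.
Proof. by rewrite AllL_In. Qed.

Lemma path_tags (G : Grp) (s s' : seq (bool * G)) x x' :
  map fst s = map fst s' -> x.1 = x'.1 -> path (@tneq G) x s = path (@tneq G) x' s'.
Proof.
elim: s s' x x' => [|y s IH] [|y' s'] x x' //= [e1 e2] e3.
by rewrite /tneq e1 e3 (IH s' y y').
Qed.

Lemma Fin_mul (G : Grp) (A B : G -> Prop) t x y :
  is_subgroup A -> is_subgroup B -> Fin A B t x -> Fin A B t y -> Fin A B t (gmul x y).
Proof. by move=> [_ [hA _]] [_ [hB _]]; case: t => /=; [apply: hA| apply: hB]. Qed.

Lemma Fin_inv (G : Grp) (A B : G -> Prop) t x :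
  is_subgroup A -> is_subgroup B -> Fin A B t x -> Fin A B t (ginv x).
Proof. by move=> [_ [_ hA]] [_ [_ hB]]; case: t => /=; [apply: hA| apply: hB]. Qed.

Lemma ginv_neq1 (G : Grp) (x : G) : x <> gone G -> ginv x <> gone G.
Proof. by move=> h e; apply: h; rewrite -(ginvK x) e ginv1. Qed.

Lemma wprod_cons (G : Grp) (x : bool * G) w : wprod (x :: w) = gmul x.2 (wprod w).
Proof. by []. Qed.

Lemma wprod_cat (G : Grp) (w1 w2 : seq (bool * G)) :
  wprod (w1 ++ w2) = gmul (wprod w1) (wprod w2).
Proof. by rewrite /wprod map_cat gprod_cat. Qed.

Lemma wprod_rcons (G : Grp) (w : seq (bool * G)) x :
  wprod (rcons w x) = gmul (wprod w) x.2.
Proof. by rewrite /wprod map_rcons gprod_rcons. Qed.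

Lemma wprod_revinv (G : Grp) (c : seq (bool * G)) :
  wprod (rev (map (@inv_l G) c)) = ginv (wprod c).
Proof.
elim: c => [|x c IH] /=; first by rewrite ginv1.
by rewrite rev_cons wprod_rcons IH ginvM.
Qed.

Definition wrap (G : Grp) (c core : seq (bool * G)) := rev (map (@inv_l G) c) ++ core ++ c.

Lemma wrap_ok (G : Grp) (A B : G -> Prop) :
  is_subgroup A -> is_subgroup B ->
  forall c k0 ks, AllL (okl A B) c -> path (@tneq G) k0 c ->
  AllL (okl A B) (k0 :: ks) -> sorted (@tneq G) (k0 :: ks) -> (last k0 ks).1 = k0.1 ->
  AllL (okl A B) (wrap c (k0 :: ks)) /\ sorted (@tneq G) (wrap c (k0 :: ks)) /\
  ~~ path.cycle (@tneq G) (wrap c (k0 :: ks)).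
Proof.
move=> sA sB; elim=> [|c1 c IH] k0 ks.
  move=> _ _ hA hs hl; rewrite /wrap /= cats0; split=> //; split=> //.
  by rewrite /= rcons_path /tneq hl eqxx andbF.
move=> /= [hc1 hc] /andP[t1 hp] hA hs hl.
have -> : wrap (c1 :: c) (k0 :: ks) = wrap c (inv_l c1 :: rcons (k0 :: ks) c1).
  by rewrite /wrap /= rev_cons cat_rcons /= cat_rcons.
apply: IH => //.
- by rewrite -(path_tags (s := c) (x := c1)).
- split; last by apply/AllL_rcons.
  case: hc1 => h1 h2; split; first exact: ginv_neq1.
  by apply: Fin_inv.
- rewrite /= rcons_path hs /=.
  by move: t1; rewrite /tneq /= hl eq_sym => ->.
- by rewrite last_rcons.
Qed.

Lemma cyc_sorted (G : Grp) (w : seq (bool * G)) : path.cycle (@tneq G) w -> sorted (@tneq G) w.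
Proof. by case: w => //= x p; rewrite rcons_path => /andP[]. Qed.

Lemma iter_rot T k (s : seq T) : k <= size s -> iter k (rot 1) s = rot k s.
Proof.
elim: k => [|k IH] hk /=; first by rewrite rot0.
by rewrite IH ?(ltnW hk) // -rotD // add1n.
Qed.

Definition uniqNF (G : Grp) (A B : G -> Prop) :=
  forall w1 w2, reduced_word A B w1 -> reduced_word A B w2 -> wprod w1 = wprod w2 -> w1 = w2.

Lemma conj_algebra (G : Grp) (z g U : G) :
  gmul (ginv (gmul z g)) (gmul U (gmul z g)) =
  gmul (ginv g) (gmul (gmul (ginv z) (gmul U z)) g).
Proof. by rewrite ginvM !gmulA. Qed.

Lemma conj_rot (G : Grp) (A B : G -> Prop) :
  is_subgroup A -> is_subgroup B -> uniqNF A B ->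
  forall c, reduced_word A B c -> forall u v, cyc_red A B u -> cyc_red A B v ->
  wprod v = gmul (ginv (wprod c)) (gmul (wprod u) (wprod c)) ->
  exists r, v = iter r (rot 1) u.
Proof.
move=> sA sB hU; elim=> [|c1 c IH] hc u v hu hv e.
  exists 0; apply: hU.
  - by case: hv => h1 [h2 _]; apply/reducedE; split=> //; apply: cyc_sorted.
  - by case: hu => h1 [h2 _]; apply/reducedE; split=> //; apply: cyc_sorted.
  by rewrite e /= ginv1 gmul1g gmulg1.
have [hcA hcs] := proj1 (reducedE _ _ _) hc.
have hc' : reduced_word A B c.
  by apply/reducedE; split; [exact: hcA.2 | exact: path_sorted hcs].
have hvr : reduced_word A B v.
  by case: hv => h1 [h2 _]; apply/reducedE; split=> //; apply: cyc_sorted.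
have notcyc : forall w, reduced_word A B w -> ~~ path.cycle (@tneq G) w -> wprod w = wprod v -> False.
  move=> w hw hnc ew; have ewv := hU _ _ hw hvr ew.
  by case: hv => _ [hcv _]; move: hnc; rewrite ewv hcv.
move: e; rewrite wprod_cons conj_algebra => e.
case: hu => huA [huc hun].
case: u huA huc hun e => [|x p] // huA huc _ e.
case/lastP: p huA huc e => [|mid y] huA huc e.
  by move: huc; rewrite /= /tneq eqxx.
have hxy : tneq y x by move: huc; rewrite /= rcons_path => /andP[_]; rewrite last_rcons.
have hpx : path (@tneq G) x (rcons mid y) by move: huc; rewrite /= rcons_path => /andP[].
case: hcA => hc1 hcA'.
have hpc : path (@tneq G) c1 c by [].
case: (boolP (c1.1 == x.1)) => E.
- case: (classic (x.2 = c1.2)) => Ez.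
  + have [r hr] : exists r, v = iter r (rot 1) (rot 1 (x :: rcons mid y)).
      apply: IH => //.
        split; first by apply/AllL_rot.
        by rewrite rot_cycle; split=> //; move/(congr1 size); rewrite size_rot.
      rewrite e; congr (gmul _ (gmul _ _)).
      by rewrite rot1_cons wprod_rcons wprod_cons -Ez !gmulA gmulVg gmul1g.
    by exists r.+1; rewrite hr iterSr.
  + exfalso.
    pose k0 := (c1.1, gmul (ginv c1.2) x.2).
    have P1 : path (@tneq G) k0 c by rewrite -(path_tags (s := c) (x := c1)).
    have P2 : AllL (okl A B) (k0 :: rcons (rcons mid y) c1).
      split.
        split.
          by move=> h; apply: Ez; rewrite -(ginvK c1.2); exact: ginv_uniq h.
        rewrite /= (eqP E); apply: Fin_mul => //; last by case: huA => [[]].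
        by apply: Fin_inv => //; case: hc1; rewrite (eqP E).
      by apply/AllL_rcons; split=> //; case: huA.
    have P3 : sorted (@tneq G) (k0 :: rcons (rcons mid y) c1).
      rewrite /= rcons_path last_rcons.
      rewrite -(path_tags (s := rcons mid y) (x := x)) //; last by rewrite /= (eqP E).
      by rewrite hpx /=; move: hxy; rewrite /tneq (eqP E) eq_sym.
    have P4 : (last k0 (rcons (rcons mid y) c1)).1 = k0.1 by rewrite last_rcons.
    have [wA [ws wnc]] := @wrap_ok G A B sA sB c k0 _ hcA' P1 P2 P3 P4.
    apply: (notcyc _ _ wnc); first by apply/reducedE.
    rewrite e /wrap wprod_cat wprod_revinv wprod_cat !wprod_cons wprod_rcons.
    by rewrite !gmulA.
- have Ey : c1.1 = y.1.
    by move: E hxy; rewrite /tneq; case: (c1.1); case: (x.1); case: (y.1).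
  case: (classic (gmul y.2 c1.2 = gone G)) => Ez.
  + pose u'' := y :: x :: mid.
    have hu1 : rot 1 u'' = x :: rcons mid y by rewrite rot1_cons.
    have [r hr] : exists r, v = iter r (rot 1) u''.
      apply: IH => //.
        split; first by apply: (proj1 (@AllL_rot _ _ 1 u'')); rewrite hu1.
        by rewrite -(rot_cycle 1) hu1; split.
      rewrite e; congr (gmul _ (gmul _ _)).
      have -> : c1.2 = ginv y.2 by apply: ginv_uniq.
      rewrite ginvK wprod_cons wprod_rcons !wprod_cons.
      by rewrite !gmulA gmulgK.
    exists (r + (size u'').-1); rewrite hr iterD; congr (iter r _ _).
    rewrite -hu1 -iterSr iter_rot ?leqnn //; exact: esym (rot_size u'').
  + exfalso.
    pose k0 := inv_l c1.
    pose ks := x :: rcons mid (c1.1, gmul y.2 c1.2).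
    have P1 : path (@tneq G) k0 c by rewrite -(path_tags (s := c) (x := c1)).
    have P2 : AllL (okl A B) (k0 :: ks).
      split.
        split; first by apply: ginv_neq1; case: hc1.
        by apply: Fin_inv => //; case: hc1.
      case: huA => hx /AllL_rcons [hm hy]; split=> //; apply/AllL_rcons; split=> //.
      split=> //=; case: hy => _ hy'; rewrite /= -Ey in hy'.
      by apply: Fin_mul => //; case: hc1.
    have P3 : sorted (@tneq G) (k0 :: ks).
      rewrite /= /ks /=; apply/andP; split=> //.
      rewrite -(path_tags (s := rcons mid y) (x := x)) //.
      by rewrite !map_rcons /= Ey.
    have P4 : (last k0 ks).1 = k0.1 by rewrite /ks /= last_rcons.
    have [wA [ws wnc]] := @wrap_ok G A B sA sB c k0 ks hcA' P1 P2 P3 P4.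
    apply: (notcyc _ _ wnc); first by apply/reducedE.
    rewrite e /wrap wprod_cat wprod_revinv wprod_cat /ks !wprod_cons !wprod_rcons.
    by rewrite /= !gmulA.
Qed.

Lemma prepend_red (G : Grp) (A B : G -> Prop) :
  is_subgroup A -> is_subgroup B ->
  forall t x w, x <> gone G -> Fin A B t x -> reduced_word A B w ->
  exists w', reduced_word A B w' /\ wprod w' = gmul x (wprod w).
Proof.
move=> sA sB t x [|[t' y] w] hx hF /reducedE [hA hs].
  by exists [:: (t, x)]; split => //; apply/reducedE; split.
case: (boolP (t' == t)) => E.
- rewrite (eqP E) in hA hs.
  case: (classic (gmul x y = gone G)) => Ez.
  + exists w; split.
      by apply/reducedE; split; [case: hA | exact: path_sorted hs].
    by rewrite wprod_cons gmulA Ez gmul1g.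
  + exists ((t, gmul x y) :: w); split; last by rewrite !wprod_cons gmulA.
    apply/reducedE; split.
      split; last by case: hA.
      split=> //=; apply: Fin_mul => //; by case: hA => [[]].
    by rewrite /= -(path_tags (s := w) (x := (t, y))).
- exists ((t, x) :: (t', y) :: w); split=> //.
  apply/reducedE; split; first by split.
  by rewrite /= {1}/tneq /= eq_sym E; exact: hs.
Qed.

Lemma reduce_exists (G : Grp) (A B : G -> Prop) :
  is_subgroup A -> is_subgroup B ->
  forall s : seq G, (forall x, List.In x s -> A x \/ B x) ->
  exists w, reduced_word A B w /\ wprod w = gprod s.
Proof.
move=> sA sB; elim=> [|x s IH] hs.
  by exists [::]; split => //; apply/reducedE.
have [w [hw ew]] : exists w, reduced_word A B w /\ wprod w = gprod s.
  by apply: IH => y hy; apply: hs; right.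
case: (classic (x = gone G)) => hx.
  by exists w; split=> //; rewrite /= hx gmul1g.
have [t ht] : exists t, Fin A B t x.
  by case: (hs x (or_introl erefl)) => h; [exists true | exists false].
have [w' [hw' ew']] := prepend_red sA sB hx ht hw.
by exists w'; split=> //; rewrite ew' ew.
Qed.

Lemma AllL_map T U (P : U -> Prop) (f : T -> U) s : AllL P (map f s) <-> AllL (fun x => P (f x)) s.
Proof. elim: s => [|x s IH] //=; rewrite IH. tauto. Qed.

Lemma AllL_rev T (P : T -> Prop) s : AllL P s -> AllL P (rev s).
Proof.
elim: s => [|x s IH] //= [hx hs]; rewrite rev_cons; apply/AllL_rcons; split=> //.
exact: IH.
Qed.

Lemma gprod_rev_inv (G : Grp) (s : seq G) : gprod (rev (map (@ginv G) s)) = ginv (gprod s).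
Proof.
elim: s => [|x s IH] /=; first by rewrite ginv1.
by rewrite rev_cons gprod_rcons IH ginvM.
Qed.

Lemma gen2_sub (G : Grp) (A B : G -> Prop) :
  is_subgroup A -> is_subgroup B -> is_subgroup (gen2 A B).
Proof.
move=> [A1 [AM AV]] [B1 [BM BV]]; split; first by exists [::].
split.
  move=> x y [s1 [h1 ->]] [s2 [h2 ->]]; exists (s1 ++ s2); split; last by rewrite gprod_cat.
  apply/AllL_In/AllL_cat; split; exact/AllL_In.
move=> x [s [hs ->]]; exists (rev (map (@ginv G) s)); split; last by rewrite gprod_rev_inv.
apply/AllL_In/AllL_rev/AllL_map; move/AllL_In: hs; elim: s => [|y s IH] //= [[hy|hy] hs].
  by split; [left; apply: AV | exact: IH].
by split; [right; apply: BV | exact: IH].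
Qed.

Section Flat.
Lemma flat_path (G : Grp) (I : Type) (P Q : I -> G) (s : seq I) z :
  path (@tneq G) (false, z) (flatten [seq [:: (true, P i); (false, Q i)] | i <- s]) /\
  (last (false, z) (flatten [seq [:: (true, P i); (false, Q i)] | i <- s])).1 = false.
Proof. by elim: s z => [|i s IH] z //=; have [-> ->] := IH (Q i). Qed.
End Flat.

Lemma flat_cyc (G : Grp) (A B : G -> Prop) (I : Type) (s : seq I) (P Q : I -> G) :
  s <> [::] -> (forall i, P i <> gone G /\ A (P i)) -> (forall i, Q i <> gone G /\ B (Q i)) ->
  cyc_red A B (flatten [seq [:: (true, P i); (false, Q i)] | i <- s]).
Proof.
move=> hs hP hQ; split.
  elim: (s) => [|i s' IH] //=; split; first exact: hP.
  by split; first exact: hQ.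
case: s hs => [|i s] // _; split=> //=.
rewrite rcons_path; have [-> hl] := flat_path P Q s (Q i); by rewrite /tneq hl.
Qed.

Lemma flat_AllL (G : Grp) (I : Type) (R : G -> Prop) (s : seq I) (P Q : I -> G) :
  (forall i, R (P i) /\ R (Q i)) -> AllL R (flatten [seq [:: P i; Q i] | i <- s]).
Proof. by move=> h; elim: s => [|i s IH] //=; have [? ?] := h i. Qed.

From mathcomp Require Import zify.
Lemma size_flat (T I : Type) (s : seq I) (P Q : I -> T) :
  size (flatten [seq [:: P i; Q i] | i <- s]) = (size s).*2.
Proof. by elim: s => [|i s IH] //=; rewrite IH. Qed.

Lemma nth_flat (T I : Type) (s : seq I) (P Q : I -> T) x0 i0 j :
  j < (size s).*2 ->
  nth x0 (flatten [seq [:: P i; Q i] | i <- s]) j =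
  if odd j then Q (nth i0 s j./2) else P (nth i0 s j./2).
Proof.
elim: s j => [|i s IH] [|[|j]] //= hj.
by rewrite IH // negbK; case: (odd j).
Qed.

Lemma iter_rot_mod T (s : seq T) r : 0 < size s -> iter r (rot 1) s = rot (r %% size s) s.
Proof.
move=> hs; have hle : r %% size s <= size s by apply: ltnW; exact: ltn_pmod.
have E : forall q, iter (q * size s) (rot 1) s = s.
  elim=> [|q IH]; first by rewrite mul0n.
  by rewrite mulSn iterD IH iter_rot // rot_size.
by rewrite {1}(divn_eq r (size s)) addnC iterD E iter_rot.
Qed.

Lemma nth_rot_mod T (x0 : T) s k j : k < size s -> j < size s ->
  nth x0 (rot k s) j = nth x0 s ((j + k) %% size s).
Proof.
move=> hk hj; rewrite /rot nth_cat size_drop.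
case: ltnP => h.
  rewrite nth_drop modn_small; first by rewrite addnC.
  by move: h hk hj; lia.
rewrite nth_take; last by move: h hk hj; lia.
have -> : j + k = (j - (size s - k)) + size s by move: h hk hj; lia.
by rewrite modnDr modn_small //; move: h hk hj; lia.
Qed.

Lemma mcycleX (m : nat) (q : nat) (i : 'I_m) : val ((mcycle m ^+ q)%g i) = (i + q) %% m.
Proof.
rewrite permX; elim: q => [|q IH] /=; first by rewrite addn0 modn_small.
by rewrite /mcycle permE /= IH -addn1 modnDml; congr modn; lia.
Qed.

Theorem lemma4p1 (G : Grp) (F0 X0 X1 : G -> Prop) (h : G -> G) (p : nat)
  (a : G) (m : nat) (as_ xs : 'I_m -> G) :
  (* G = F0 * (X0 * X1) *)
  free_product X0 X1 ->
  free_product F0 (gen2 X0 X1) ->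
  (forall g : G, gen2 F0 (gen2 X0 X1) g) ->
  (* h is an automorphism of G fixing F0 pointwise *)
  is_automorphism h ->
  (forall f, F0 f -> h f = f) ->
  (* h leaves X0 * X1 invariant *)
  (forall y, gen2 X0 X1 y -> gen2 X0 X1 (h y)) ->
  (forall y, gen2 X0 X1 y -> exists y', gen2 X0 X1 y' /\ h y' = y) ->
  (* on X0 * X1, h has prime order p and fixed point set exactly X0 *)
  prime p ->
  order_on (gen2 X0 X1) h p ->
  (forall y, gen2 X0 X1 y -> (h y = y <-> X0 y)) ->
  (* a is not in (F0 * X0) \cup (X0 * X1) *)
  ~ gen2 F0 X0 a -> ~ gen2 X0 X1 a ->
  (* a = a_1 x_1 ... a_m x_m cyclically reduced *)
  (forall i, F0 (as_ i) /\ as_ i <> gone G) ->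
  (forall i, gen2 X0 X1 (xs i) /\ xs i <> gone G) ->
  a = gprod (flatten [seq [:: as_ i; xs i] | i <- enum 'I_m]) ->
  (* h fixes the conjugacy class of a *)
  are_conjugate a (h a) ->
  exists sigma : 'S_m,
    sigma \in <[mcycle m]>%g /\
    (forall i, as_ i = as_ (sigma i) /\ h (xs i) = xs (sigma i)) /\
    (p %| #[sigma]%g)%N.
Proof.
move=> hX hF hgen [hhom hbij] hfix hinv hsurj hp hord hfixX na0 na1 has hxs ha hconj.
have [sF0 [sY huniq]] := hF.
have hU : uniqNF F0 (gen2 X0 X1) by move=> w1 w2; exact: huniq w1 w2.
have hinj : injective h := bij_inj hbij.
have h1 : h (gone G) = gone G.
  by apply: (@gmulI _ (h (gone G))); rewrite -hhom gmul1g gmulg1.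
have hprod : forall s, h (gprod s) = gprod (map h s).
  by elim=> [|x s IH] //=; rewrite hhom IH.
have mpos : 0 < m.
  case: (posnP m) => // m0; exfalso; apply: na1; exists [::]; split=> //.
  rewrite ha; have -> : enum 'I_m = [::] by apply: size0nil; rewrite size_enum_ord m0.
  by [].
pose i0 : 'I_m := Ordinal mpos.
pose u := flatten [seq [:: (true, as_ i); (false, xs i)] | i <- enum 'I_m].
pose v := flatten [seq [:: (true, as_ i); (false, h (xs i))] | i <- enum 'I_m].
have enum_ne : enum 'I_m <> [::].
  by move/(congr1 size); rewrite size_enum_ord => e; have := mpos; rewrite e.
have cu : cyc_red F0 (gen2 X0 X1) u.
  apply: flat_cyc => // i; [by case: (has i) | by case: (hxs i)].
have cv : cyc_red F0 (gen2 X0 X1) v.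
  apply: flat_cyc => // i; first by case: (has i).
  case: (hxs i) => hy hn; split; last exact: hinv.
  by rewrite -h1 => /hinj.
have wu : wprod u = a.
  rewrite ha /wprod /u; congr gprod; elim: (enum 'I_m) => [|i s IH] //=.
  by rewrite IH.
have wv : wprod v = h a.
  rewrite ha hprod /wprod /v; congr gprod; elim: (enum 'I_m) => [|i s IH] //=.
  by rewrite IH (hfix (as_ i)) //; case: (has i).
have [g eg] := hconj.
have [s [hs eg']] := hgen g.
have [c [hc ec]] := reduce_exists sF0 sY hs.
have [r hr] : exists r, v = iter r (rot 1) u.
  apply: (conj_rot sF0 sY hU hc cu cv).
  by rewrite wv wu ec -eg'.
have su : size u = m.*2 by rewrite size_flat size_enum_ord.
have su0 : 0 < size u by rewrite su double_gt0.
rewrite iter_rot_mod // in hr.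
set k := r %% size u in hr.
have hk : k < size u by exact: ltn_pmod.
pose x0 := (true, gone G).
have nu : forall j, j < m.*2 -> nth x0 u j =
    if odd j then (false, xs (nth i0 (enum 'I_m) j./2))
    else (true, as_ (nth i0 (enum 'I_m) j./2)).
  by move=> j hj; rewrite /u (@nth_flat _ _ _ _ _ _ i0) // size_enum_ord.
have nv : forall j, j < m.*2 -> nth x0 v j =
    if odd j then (false, h (xs (nth i0 (enum 'I_m) j./2)))
    else (true, as_ (nth i0 (enum 'I_m) j./2)).
  by move=> j hj; rewrite /v (@nth_flat _ _ _ _ _ _ i0) // size_enum_ord.
have hvat : forall j, j < m.*2 -> nth x0 v j = nth x0 u ((j + k) %% m.*2).
  by move=> j hj; rewrite hr nth_rot_mod // su.
have ko : ~~ odd k.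
  have h0 : 0 < m.*2 by rewrite double_gt0.
  apply/negP => ko; have := hvat 0 h0.
  rewrite nv // add0n modn_small -?su // nu -?su // ko.
  by [].
have [q kq] : exists q, k = q.*2.
  by exists k./2; rewrite -[LHS]odd_double_half (negbTE ko).
have hq : q < m by rewrite -ltn_double -kq -su.
pose sig := (mcycle m ^+ q)%g.
have hsig : forall i : 'I_m, nth i0 (enum 'I_m) ((i + q) %% m) = sig i.
  by move=> i; apply: val_inj; rewrite /= nth_enum_ord ?mcycleX // ltn_pmod.
have hni : forall i : 'I_m, nth i0 (enum 'I_m) i = i.
  by move=> i; apply: val_inj; rewrite /= nth_enum_ord.
have key : forall i : 'I_m, as_ i = as_ (sig i) /\ h (xs i) = xs (sig i).
  move=> i; have him := ltn_ord i.
  have hi1 : i.*2 < m.*2 by rewrite ltn_double.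
  have hi2 : i.*2.+1 < m.*2 by rewrite -!mul2n; lia.
  have ht := ltn_pmod (i + q) mpos.
  have e1 : (i.*2 + k) %% m.*2 = ((i + q) %% m).*2.
    by rewrite kq -doubleD -!mul2n muln_modr.
  have e2 : (i.*2.+1 + k) %% m.*2 = ((i + q) %% m).*2.+1.
    have ed := divn_eq (i + q) m.
    have -> : i.*2.+1 + k = (i + q) %/ m * m.*2 + ((i + q) %% m).*2.+1.
      rewrite kq; have -> : (i + q) %/ m * m.*2 = ((i + q) %/ m * m).*2 by rewrite -!mul2n mulnCA.
      move: ed; rewrite -!mul2n; lia.
    rewrite modnMDl modn_small //; rewrite -!mul2n; lia.
  split.
    have := hvat _ hi1; rewrite nv // nu; last by rewrite e1 ltn_double.
    by rewrite e1 !odd_double !doubleK hni hsig => -[].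
  have := hvat _ hi2; rewrite nv // nu; last by rewrite e2 -!mul2n; lia.
  by rewrite e2 /= !odd_double !uphalf_double hni hsig => -[].
exists sig; split; first exact: mem_cycle.
split; first exact: key.
have hit : forall j (i : 'I_m), iter j h (xs i) = xs ((sig ^+ j)%g i).
  elim=> [|j IH] i /=; first by rewrite expg0 perm1.
  by rewrite IH (key _).2 expgSr permM.
have hd : forall i, iter #[sig]%g h (xs i) = xs i.
  by move=> i; rewrite hit expg_order perm1.
case: (boolP (p %| #[sig]%g)) => // nd.
exfalso; apply: na0.
have p0 := prime_gt0 hp.
have [a0 _ ha0] := Bezoutl #[sig]%g p0.
have cop : coprime p #[sig]%g by rewrite prime_coprime.
rewrite (eqP cop) in ha0.
have hY : forall n y, gen2 X0 X1 y -> iter (n * p) h y = y.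
  elim=> [|n IH] y hy; first by rewrite mul0n.
  by rewrite mulSn iterD (IH y hy); exact: hord.2.1 y hy.
have hD : forall n i, iter (n * #[sig]%g) h (xs i) = xs i.
  elim=> [|n IH] i; first by rewrite mul0n.
  by rewrite mulSn iterD IH hd.
have fixi : forall i, h (xs i) = xs i.
  move=> i; have e1 : iter (1 + a0 * #[sig]%g) h (xs i) = h (xs i) by rewrite iterD hD.
  by rewrite -e1 -(divnK ha0) hY //; case: (hxs i).
have X0i : forall i, X0 (xs i).
  by move=> i; apply/(hfixX _ (hxs i).1); exact: fixi.
exists (flatten [seq [:: as_ i; xs i] | i <- enum 'I_m]); split; last exact: ha.
apply/AllL_In; apply: flat_AllL => i; split; [left; exact: (has i).1 | right; exact: X0i].
Qed.
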